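(* Let $\Omega\subset B(\mathcal H)^d$ be an NC domain and $f:\Omega\to B(\mathcal H)^r$ an NC function. If $x,y\in\Omega$ and $L\in B(\mathcal H)$ satisfy $Lx=yL$, then $Lf(x)=f(y)L$.
   Context: Throughout, $\mathcal H$ is an infinite-dimensional separable complex Hilbert space, $B(\mathcal H)$ the bounded operators with the operator norm, and $\mathcal H^{(l)}$ ($l\in\mathbb N\cup\{\infty\}$) the direct sum of $l$ copies of $\mathcal H$. $B(\mathcal H)^d$ has the norm $\|x\|=\max_i\|x^i\|$. Operations on tuples are componentwise: for $L\in B(\mathcal H)$, $Lx=(Lx^1,\dots,Lx^d)$ and $xL=(x^1L,\dots,x^dL)$; for bounded invertible linear $s:\mathcal H\to\mathcal H^{(l)}$ and $z\in B(\mathcal H^{(l)})^d$, $s^{-1}zs=(s^{-1}z^1s,\dots,s^{-1}z^ds)$; for a finite or countable uniformly bounded sequence $x_1,x_2,\dots$ in $B(\mathcal H)^d$ of length $l$, $\bigoplus_n x_n\in B(\mathcal H^{(l)})^d$ has $i$-th entry $\bigoplus_n x_n^i$; block matrices of tuples are defined entrywise per coordinate. A set is unitarily invariant if $u^*xu$ lies in it for each of its elements $x$ and each unitary $u\in B(\mathcal H)$. NC domain: $\Omega\subset B(\mathcal H)^d$ is an NC domain if there are subsets $\Omega_1,\Omega_2,\dots$ of $\Omega$ with (1) $\Omega_k\subset\mathrm{int}\,\Omega_{k+1}$ (norm interior) and $\Omega=\bigcup_k\Omega_k$; (2) each $\Omega_k$ norm-bounded and unitarily invariant; (3) for every sequence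 $x_1,x_2,\dots$ in $\Omega_k$ of length $l\in\mathbb N\cup\{\infty\}$ there is a unitary $u:\mathcal H\to\mathcal H^{(l)}$ with $u^{-1}(\bigoplus_n x_n)u\in\Omega_k$. NC function: $f:\Omega\to B(\mathcal H)^r$ on an NC domain is NC if whenever $x,y\in\Omega$ and $s:\mathcal H\to\mathcal H^{(2)}$ is bounded, linear, invertible with $s^{-1}\begin{bmatrix}x&0\\0&y\end{bmatrix}s\in\Omega$, then $f\Big(s^{-1}\begin{bmatrix}x&0\\0&y\end{bmatrix}s\Big)=s^{-1}\begin{bmatrix}f(x)&0\\0&f(y)\end{bmatrix}s$. *)

(* Defs.v *)
(* classical reals. Concrete model H = l^2(N; C). *)
From Stdlib Require Import Reals List.
From Stdlib Require Fin.
Open Scope R_scope.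

Definition C := (R * R)%type.
Definition Cadd (a b : C) : C := (fst a + fst b, snd a + snd b).
Definition Csub (a b : C) : C := (fst a - fst b, snd a - snd b).
Definition Cmul (a b : C) : C :=
  (fst a * fst b - snd a * snd b, fst a * snd b + snd a * fst b).
Definition Cnorm2 (a : C) : R := fst a * fst a + snd a * snd a.

Definition vadd {J : Type} (v w : J -> C) : J -> C := fun j => Cadd (v j) (w j).
Definition vscal {J : Type} (a : C) (v : J -> C) : J -> C := fun j => Cmul a (v j).

Fixpoint sumsq {J : Type} (v : J -> C) (s : list J) : R :=
  match s with nil => 0 | j :: s' => Cnorm2 (v j) + sumsq v s' end.

(* nrm2_le v c  <->  ||v||^2 <= c  (sup over finite sets of indices) *)
Definition nrm2_le {J : Type} (v : J -> C) (c : R) : Prop :=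
  forall s : list J, NoDup s -> sumsq v s <= c.

Definition l2 {J : Type} (v : J -> C) : Prop := exists c, nrm2_le v c.

(* square-summable vectors supported in supp (models a closed subspace
   such as H^(l) inside l^2(N x N)) *)
Definition l2_in {J : Type} (supp : J -> Prop) (w : J -> C) : Prop :=
  l2 w /\ forall j, ~ supp j -> w j = (0, 0).

Definition linear_on {J1 J2 : Type} (T : (J1 -> C) -> (J2 -> C)) : Prop :=
  forall a b v w, l2 v -> l2 w -> forall j,
    T (vadd (vscal a v) (vscal b w)) j = Cadd (Cmul a (T v j)) (Cmul b (T w j)).

Definition op_bound {J1 J2 : Type} (T : (J1 -> C) -> (J2 -> C)) (M : R) : Prop :=
  0 <= M /\ forall v c, nrm2_le v c -> nrm2_le (T v) (M * M * c).

(* A bounded operator, normalized to 0 on non-l2 inputs so that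
   Leibniz equality of operators is equality on H. *)
Record Op := mkOp {
  op :> (nat -> C) -> (nat -> C);
  op_lin : linear_on op;
  op_bdd : exists M, op_bound op M;
  op_junk : forall v, ~ l2 v -> forall k, op v k = (0, 0)
}.

Definition Tup (d : nat) := Fin.t d -> Op.

Inductive natinf := NFin (n : nat) | NInf.
Definition below (l : natinf) (n : nat) : Prop :=
  match l with NFin m => (n < m)%nat | NInf => True end.

(* H^(l) is modelled as the l^2 vectors on N x N supported on {(n,k) | n < l};
   the n-th summand is k |-> w (n,k). *)
Definition supp_l (l : natinf) : nat * nat -> Prop := fun p => below l (fst p).
Definition suppH : nat -> Prop := fun _ => True.

Definition unitary {J : Type} (supp : J -> Prop) (u : (nat -> C) -> (J -> C)) : Prop :=
  linear_on u /\
  (forall v, l2 v -> l2_in supp (u v)) /\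
  (forall v c, l2 v -> (nrm2_le v c <-> nrm2_le (u v) c)) /\
  (forall w, l2_in supp w -> exists v, l2 v /\ forall j, u v j = w j).

Definition bdd_invertible {J : Type} (supp : J -> Prop) (s : (nat -> C) -> (J -> C)) : Prop :=
  linear_on s /\
  (exists M, op_bound s M) /\
  (forall v, l2 v -> l2_in supp (s v)) /\
  (forall v w, l2 v -> l2 w -> (forall j, s v j = s w j) -> forall k, v k = w k) /\
  (forall w, l2_in supp w -> exists v, l2 v /\ forall j, s v j = w j) /\
  (exists m, 0 <= m /\ forall v c, l2 v -> nrm2_le (s v) c -> nrm2_le v (m * c)).

Definition dsum {d : nat} (xs : nat -> Tup d) (i : Fin.t d)
  : (nat * nat -> C) -> (nat * nat -> C) :=
  fun w p => xs (fst p) i (fun k => w (fst p, k)) (snd p).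

Definition pair_seq {d : nat} (x y : Tup d) : nat -> Tup d :=
  fun n => match n with O => x | _ => y end.

Definition bounded_set {d : nat} (S : Tup d -> Prop) : Prop :=
  exists M, forall x, S x -> forall i, op_bound (x i) M.

Definition interior_pt {d : nat} (S : Tup d -> Prop) (x : Tup d) : Prop :=
  exists eps, 0 < eps /\
    forall y : Tup d, (forall i, op_bound (fun v k => Csub (y i v k) (x i v k)) eps) -> S y.

Definition is_NC_domain {d : nat} (Om : Tup d -> Prop) : Prop :=
  exists Omk : nat -> Tup d -> Prop,
    (forall k x, Omk k x -> Om x) /\
    (forall x, Om x -> exists k, Omk k x) /\
    (forall k x, Omk k x -> interior_pt (Omk (S k)) x) /\
    (forall k, bounded_set (Omk k)) /\
    (* unitary invariance: u^* x u in Omk k, i.e. the x' with u x' = x u *)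
    (forall k x u, Omk k x -> unitary suppH u ->
       exists x', Omk k x' /\
         forall i v, l2 v -> forall j, u (x' i v) j = x i (u v) j) /\
    (* direct sums: u^{-1} ((+)_n xs n) u in Omk k for some unitary u : H -> H^(l) *)
    (forall k (l : natinf) (xs : nat -> Tup d), l <> NFin 0 ->
       (forall n, below l n -> Omk k (xs n)) ->
       exists u, unitary (supp_l l) u /\
         exists w, Omk k w /\
           forall i v, l2 v -> forall n j, below l n ->
             u (w i v) (n, j) = dsum xs i (u v) (n, j)).

Definition is_NC_function {d r : nat} (Om : Tup d -> Prop) (f : Tup d -> Tup r) : Prop :=
  forall x y (s : (nat -> C) -> (nat * nat -> C)),
    Om x -> Om y -> bdd_invertible (supp_l (NFin 2)) s ->
    forall w, Om w ->
      (* w = s^{-1} [[x,0],[0,y]] s *)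
      (forall i v, l2 v -> forall n j, below (NFin 2) n ->
         s (w i v) (n, j) = dsum (pair_seq x y) i (s v) (n, j)) ->
      (* f w = s^{-1} [[f x,0],[0,f y]] s *)
      (forall i v, l2 v -> forall n j, below (NFin 2) n ->
         s (f w i v) (n, j) = dsum (pair_seq (f x) (f y)) i (s v) (n, j)).

(* Main.v *)
Require Import Defs.
From Stdlib Require Import Reals List.
From Stdlib Require Fin.
From Stdlib Require Import Lra Lia Psatz FunctionalExtensionality.
Open Scope R_scope.
Local Notation C := Defs.C.

Ltac Cring := unfold vadd, vscal; unfold Cadd, Cmul, Csub; cbv beta; apply injective_projections; cbn [fst snd]; ring.

Lemma Cn_nn a : 0 <= Cnorm2 a.
Proof. destruct a; unfold Cnorm2; simpl; nra. Qed.
Lemma Cn_add a b : Cnorm2 (Cadd a b) <= 2*Cnorm2 a + 2*Cnorm2 b.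
Proof. destruct a as [a1 a2], b as [b1 b2]; unfold Cnorm2, Cadd; simpl.
  pose proof (pow2_ge_0 (a1-b1)); pose proof (pow2_ge_0 (a2-b2)); nra. Qed.
Lemma Cn_sub a b : Cnorm2 (Csub a b) <= 2*Cnorm2 a + 2*Cnorm2 b.
Proof. destruct a as [a1 a2], b as [b1 b2]; unfold Cnorm2, Csub; simpl.
  pose proof (pow2_ge_0 (a1+b1)); pose proof (pow2_ge_0 (a2+b2)); nra. Qed.
Lemma Cn_inv a x : Cnorm2 x <= 2*Cnorm2 (Cadd a x) + 2*Cnorm2 a.
Proof. destruct a as [a1 a2], x as [b1 b2]; unfold Cnorm2, Cadd; simpl.
  pose proof (pow2_ge_0 (2*a1+b1)); pose proof (pow2_ge_0 (2*a2+b2)); nra. Qed.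
Lemma Cn_mul a z : Cnorm2 (Cmul a z) = Cnorm2 a * Cnorm2 z.
Proof. destruct a, z; unfold Cnorm2, Cmul; simpl; ring. Qed.
Lemma Cn_0 : Cnorm2 (0,0) = 0.
Proof. unfold Cnorm2; simpl; ring. Qed.

Lemma sumsq_le {J} (F g h : J -> C) (a b : R) s :
  (forall j, Cnorm2 (F j) <= a * Cnorm2 (g j) + b * Cnorm2 (h j)) ->
  sumsq F s <= a * sumsq g s + b * sumsq h s.
Proof. intros H; induction s; simpl; [lra|]. specialize (H a0). nra. Qed.

Lemma sumsq_zero {J} (s : list J) : sumsq (fun _ => (0,0)) s = 0.
Proof. induction s; simpl; [reflexivity| rewrite IHs, Cn_0; ring]. Qed.

Lemma nrm2_c {J} (v : J -> C) c : nrm2_le v c -> 0 <= c.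
Proof. intro H. exact (H nil (NoDup_nil _)). Qed.

Lemma nrm2_slice (g : nat*nat -> C) c n0 : nrm2_le g c -> nrm2_le (fun k => g (n0,k)) c.
Proof.
  intros H t Ht.
  assert (E : sumsq (fun k => g (n0,k)) t = sumsq g (map (fun k => (n0,k)) t)).
  { clear Ht; induction t; simpl; [reflexivity| rewrite IHt; reflexivity]. }
  rewrite E; apply H; apply NoDup_map_NoDup_ForallPairs; [|exact Ht].
  intros a b _ _ E'; injection E'; auto.
Qed.

Lemma l2_slice (g : nat*nat -> C) n0 : l2 g -> l2 (fun k => g (n0,k)).
Proof. intros [c H]; exists c; apply nrm2_slice; auto. Qed.

Definition emb (n0 : nat) (k : nat -> C) : nat*nat -> C :=
  fun p => if Nat.eqb (fst p) n0 then k (snd p) else (0,0).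
Fixpoint sel (n0 : nat) (s : list (nat*nat)) : list nat :=
  match s with nil => nil
  | p :: s' => if Nat.eqb (fst p) n0 then snd p :: sel n0 s' else sel n0 s' end.

Lemma sel_in n0 s j : In j (sel n0 s) -> In (n0,j) s.
Proof.
  induction s as [|[a b] s IH]; simpl; auto.
  destruct (Nat.eqb_spec a n0); simpl; intros H.
  - destruct H as [H|H]; [left; subst; reflexivity| right; auto].
  - right; auto.
Qed.

Lemma sel_nodup n0 s : NoDup s -> NoDup (sel n0 s).
Proof.
  induction s as [|[a b] s IH]; simpl; intros H; [constructor|].
  inversion H; subst.
  destruct (Nat.eqb_spec a n0); simpl; auto.
  constructor; auto. intro Hin; apply sel_in in Hin; subst; auto.
Qed.

Lemma sumsq_emb n0 k s : sumsq (emb n0 k) s = sumsq k (sel n0 s).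
Proof.
  induction s as [|[a b] s IH]; simpl; [reflexivity|].
  unfold emb at 1; simpl.
  destruct (Nat.eqb a n0); simpl; rewrite IH; [reflexivity| rewrite Cn_0; ring].
Qed.

Lemma nrm2_emb n0 k c : nrm2_le k c -> nrm2_le (emb n0 k) c.
Proof. intros H s Hs; rewrite sumsq_emb; apply H; apply sel_nodup; auto. Qed.

Lemma l2_comb (a b : C) v w : l2 v -> l2 w -> @l2 nat (vadd (vscal a v) (vscal b w)).
Proof.
  intros [c1 H1] [c2 H2].
  exists (2*Cnorm2 a*c1 + 2*Cnorm2 b*c2). intros s Hs.
  eapply Rle_trans. apply (sumsq_le _ v w (2*Cnorm2 a) (2*Cnorm2 b)).
  { intro j; unfold vadd, vscal; eapply Rle_trans; [apply Cn_add|]; rewrite !Cn_mul; lra. }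
  specialize (H1 s Hs); specialize (H2 s Hs); pose proof (Cn_nn a); pose proof (Cn_nn b).
  nra.
Qed.

Lemma l2_op (b : Op) p : l2 p -> l2 (b p).
Proof.
  intros [c Hc]. destruct (op_bdd b) as [M [HM HB]]. exists (M*M*c). apply HB; auto.
Qed.

Lemma op_add (b : Op) p q : l2 p -> l2 q -> forall j, b (vadd p q) j = Cadd (b p j) (b q j).
Proof.
  intros Hp Hq j. pose proof (op_lin b (1,0) (1,0) p q Hp Hq j) as H.
  replace (vadd (vscal (1,0) p) (vscal (1,0) q)) with (vadd p q) in H
    by (extensionality k; Cring).
  rewrite H; Cring.
Qed.

Lemma l2_zero : @l2 nat (fun _ => (0,0)).
Proof. exists 0; intros s _; rewrite sumsq_zero; lra. Qed.

Lemma op_zero (b : Op) j : b (fun _ => (0,0)) j = (0,0).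
Proof.
  pose proof (op_lin b (0,0) (0,0) _ _ l2_zero l2_zero j) as H.
  replace (vadd (vscal (0,0) (fun _ : nat => (0,0))) (vscal (0,0) (fun _ : nat => (0,0))))
    with (fun _ : nat => ((0,0):C)) in H by (extensionality k; Cring).
  rewrite H; Cring.
Qed.

Lemma zlin : @linear_on nat nat (fun _ _ => (0,0)).
Proof. intros a b v w _ _ j; Cring. Qed.
Lemma zbdd : exists M, @op_bound nat nat (fun _ _ => (0,0)) M.
Proof.
  exists 0; split; [lra|]. intros v c H s _. rewrite sumsq_zero.
  pose proof (nrm2_c _ _ H); nra.
Qed.
Lemma zjunk : forall v : nat -> C, ~ l2 v -> forall k : nat, ((fun _ _ => (0,0)) : (nat -> C) -> nat -> C) v k = (0,0).
Proof. reflexivity. Qed.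
Definition zop : Op := mkOp (fun _ _ => (0,0)) zlin zbdd zjunk.

Lemma unitary_inj {J} supp (u : (nat -> C) -> (J -> C)) v w :
  unitary supp u -> l2 v -> l2 w -> (forall j, u v j = u w j) -> forall k, v k = w k.
Proof.
  intros (Hlin & Hin & Hn & Hs) Hv Hw E k.
  set (dd := vadd (vscal (1,0) v) (vscal (-1,0) w)).
  assert (Hd : l2 dd) by (apply l2_comb; auto).
  assert (Hud : nrm2_le (u dd) 0).
  { intros s _. eapply Rle_trans. apply (sumsq_le _ (u dd) (u dd) 0 0).
    - intro j. unfold dd. rewrite Hlin by auto. rewrite E.
      replace (Cadd (Cmul (1, 0) (u w j)) (Cmul (-1, 0) (u w j))) with ((0,0):C) by Cring.
      rewrite Cn_0; lra.
    - lra. }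
  apply (Hn dd 0 Hd) in Hud.
  specialize (Hud (k :: nil) (NoDup_cons _ (fun H : In k nil => H) (NoDup_nil _))).
  simpl in Hud. unfold dd, vadd, vscal, Cadd, Cmul, Cnorm2 in Hud.
  destruct (v k) as [a1 a2], (w k) as [b1 b2]; simpl in Hud.
  replace (1 * a1 - 0 * a2 + (-1 * b1 - 0 * b2)) with (a1 - b1) in Hud by ring.
  replace (1 * a2 + 0 * a1 + (-1 * b2 + 0 * b1)) with (a2 - b2) in Hud by ring.
  pose proof (Rle_0_sqr (a1-b1)); pose proof (Rle_0_sqr (a2-b2)); unfold Rsqr in *.
  assert (E1 : (a1 - b1) * (a1 - b1) = 0) by lra. assert (E2 : (a2 - b2) * (a2 - b2) = 0) by lra.
  apply Rmult_integral in E1; apply Rmult_integral in E2.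
  f_equal; lra.
Qed.

Lemma key_bound (L : Op) ML (HML : op_bound L ML) (g F : nat*nat -> C) c :
  nrm2_le g c ->
  (forall p, Cnorm2 (F p) <= 2*Cnorm2 (g p) + 2*Cnorm2 (emb 1 (L (fun k => g (0%nat,k))) p)) ->
  nrm2_le F ((2+2*ML*ML)*c).
Proof.
  intros Hg HF s Hs.
  eapply Rle_trans. apply (sumsq_le _ _ _ 2 2 s HF).
  destruct HML as [HM HB].
  pose proof (nrm2_emb 1 _ _ (HB _ _ (nrm2_slice g c 0 Hg)) s Hs).
  pose proof (Hg s Hs). nra.
Qed.

Lemma Cadd_cancel_l a x y : Cadd a x = Cadd a y -> x = y.
Proof.
  destruct a as [a1 a2], x as [x1 x2], y as [y1 y2]; unfold Cadd; simpl; intro H.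
  injection H; intros; f_equal; lra.
Qed.

Definition sL (u : (nat -> C) -> (nat*nat -> C)) (L : (nat -> C) -> (nat -> C))
  (v : nat -> C) (p : nat*nat) : C :=
  match p with (n,j) => match n with
  | O => u v (0%nat,j)
  | S O => Cadd (L (fun k => u v (0%nat,k)) j) (u v (1%nat,j))
  | _ => (0,0) end end.

Lemma sL_bi u (L : Op) : unitary (supp_l (NFin 2)) u -> bdd_invertible (supp_l (NFin 2)) (sL u L).
Proof.
  intros Hu. pose proof Hu as (Hlin & Hin & Hn & Hsurj).
  destruct (op_bdd L) as [ML HML]. pose proof (proj1 HML) as HML0.
  assert (Hsup : forall v, l2 v -> forall n j, (2 <= n)%nat -> u v (n,j) = (0,0)).
  { intros v Hv n j Hnj. apply (proj2 (Hin v Hv)). unfold supp_l, below; simpl; lia. }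
  assert (Hbd : forall v c, nrm2_le v c -> nrm2_le (sL u L v) ((2+2*ML*ML)*c)).
  { intros v c Hvc. assert (Hl : l2 v) by (exists c; auto).
    pose proof (proj1 (Hn v c Hl) Hvc) as Huv.
    apply (key_bound L ML HML (u v)); auto.
    intros [[|[|n]] j]; cbn [sL emb fst snd Nat.eqb].
    - rewrite Cn_0; pose proof (Cn_nn (u v (0%nat,j))); lra.
    - eapply Rle_trans; [apply Cn_add|]; lra.
    - rewrite Cn_0; pose proof (Cn_nn (u v (S (S n),j))); pose proof (Cn_nn (0,0)); lra. }
  split.
  { intros a b v w Hv Hw [[|[|n]] j]; cbn [sL].
    - apply Hlin; auto.
    - assert (E : (fun k => u (vadd (vscal a v) (vscal b w)) (0%nat,k))
                 = vadd (vscal a (fun k => u v (0%nat,k))) (vscal b (fun k => u w (0%nat,k)))).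
      { extensionality k. rewrite Hlin by auto. reflexivity. }
      rewrite E, (op_lin L a b _ _ (l2_slice _ 0 (proj1 (Hin v Hv))) (l2_slice _ 0 (proj1 (Hin w Hw))) j).
      rewrite Hlin by auto. Cring.
    - Cring. }
  split.
  { exists (sqrt (2+2*ML*ML)). split; [apply sqrt_pos|]. intros v c H.
    rewrite sqrt_sqrt by nra. apply Hbd; auto. }
  split.
  { intros v [c Hc]. split. exists ((2+2*ML*ML)*c); apply Hbd; auto.
    intros [n j] Hns. unfold supp_l, below in Hns; simpl in Hns.
    destruct n as [|[|n]]; [lia|lia|reflexivity]. }
  split.
  { intros v w Hv Hw E.
    assert (E' : forall q, u v q = u w q).
    { assert (E0 : forall j, u v (0%nat,j) = u w (0%nat,j)) by (intro j; exact (E (0%nat,j))).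
      assert (F : (fun k => u v (0%nat,k)) = (fun k => u w (0%nat,k))) by (extensionality k; auto).
      intros [[|[|n]] j]; auto.
      - pose proof (E (1%nat,j)) as E1; cbn [sL] in E1. rewrite F in E1.
        apply Cadd_cancel_l in E1; exact E1.
      - rewrite !Hsup by (auto; lia); reflexivity. }
    apply (unitary_inj _ u v w Hu Hv Hw E'). }
  split.
  { intros w [[c Hc] Hws].
    set (w' := fun p : nat*nat => match p with (n,j) => match n with
                 | O => w (0%nat,j)
                 | S O => Csub (w (1%nat,j)) (L (fun k => w (0%nat,k)) j)
                 | _ => (0,0) end end).
    assert (Hw' : l2_in (supp_l (NFin 2)) w').
    { split.
      - exists ((2+2*ML*ML)*c). apply (key_bound L ML HML w); auto.
        intros [[|[|n]] j]; unfold w'; cbn [emb fst snd Nat.eqb].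
        + rewrite Cn_0; pose proof (Cn_nn (w (0%nat,j))); lra.
        + eapply Rle_trans; [apply Cn_sub|]; lra.
        + rewrite Cn_0; pose proof (Cn_nn (w (S (S n),j))); pose proof (Cn_nn (0,0)); lra.
      - intros [n j] Hns. unfold supp_l, below in Hns; simpl in Hns. unfold w'.
        destruct n as [|[|n]]; [lia|lia|reflexivity]. }
    destruct (Hsurj w' Hw') as [v [Hv Hvw]]. exists v; split; auto.
    intros [[|[|n]] j]; cbn [sL].
    - rewrite Hvw; reflexivity.
    - assert (F : (fun k => u v (0%nat,k)) = (fun k => w (0%nat,k)))
        by (extensionality k; rewrite Hvw; reflexivity).
      rewrite F, Hvw. unfold w'. Cring.
    - symmetry; apply Hws; unfold supp_l, below; simpl; lia. }
  { exists (2+2*ML*ML). split; [nra|]. intros v c Hv Hs.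
    apply (Hn v _ Hv). apply (key_bound L ML HML (sL u L v)); auto.
    intros [[|[|n]] j]; cbn [sL emb fst snd Nat.eqb].
    - rewrite Cn_0; pose proof (Cn_nn (u v (0%nat,j))); lra.
    - apply Cn_inv.
    - rewrite Hsup by (auto; lia). rewrite Cn_0; pose proof (Cn_nn (0,0)); lra. }
Qed.

Theorem mainTheorem7 (d r : nat) (Om : Tup d -> Prop) (f : Tup d -> Tup r)
  (HOm : is_NC_domain Om) (Hf : is_NC_function Om f)
  (x y : Tup d) (L : Op) (Hx : Om x) (Hy : Om y)
  (HL : forall i v, l2 v -> forall k, L (x i v) k = y i (L v) k) :
  forall i v, l2 v -> forall k, L (f x i v) k = f y i (L v) k.
Proof.
  destruct HOm as (Omk & Hsub & Hcov & Hint & Hbdd & Huinv & Hds).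
  assert (Hmono1 : forall k z, Omk k z -> Omk (S k) z).
  { intros k z Hz. destruct (Hint k z Hz) as [eps [Heps HH]]. apply HH.
    intros i'. split; [lra|]. intros v c Hc s _.
    eapply Rle_trans. apply (sumsq_le _ v v 0 0).
    - intro j; cbv beta.
      replace (Csub (z i' v j) (z i' v j)) with ((0,0):C) by Cring.
      rewrite Cn_0; lra.
    - pose proof (nrm2_c _ _ Hc). nra. }
  assert (Hmono : forall m k z, Omk k z -> Omk (m+k)%nat z)
    by (induction m; simpl; auto).
  destruct (Hcov x Hx) as [kx Hkx]. destruct (Hcov y Hy) as [ky Hky].
  assert (Hx' : Omk (ky+kx)%nat x) by auto.
  assert (Hy' : Omk (ky+kx)%nat y) by (rewrite Nat.add_comm; auto).
  destruct (Hds (ky+kx)%nat (NFin 2) (pair_seq x y)) as [u [Hu [w0 [Hw0 Hrel]]]].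
  { discriminate. }
  { intros [|[|n]] Hn; simpl; auto. }
  pose proof Hu as (Hlin & Hin & Hn & Hsurj).
  assert (Hw0' : Om w0) by (eapply Hsub; eauto).
  assert (Gen : forall L' : Op,
    (forall i v, l2 v -> forall k, L' (x i v) k = y i (L' v) k) ->
    forall i v, l2 v -> forall n j, below (NFin 2) n ->
      sL u L' (f w0 i v) (n,j) = dsum (pair_seq (f x) (f y)) i (sL u L' v) (n,j)).
  { intros L' HL'. apply (Hf x y (sL u L') Hx Hy (sL_bi u L' Hu) w0 Hw0').
    intros i v Hv [|[|n]] j Hnb; [| |simpl in Hnb; lia].
    - cbn [sL]. rewrite (Hrel i v Hv 0%nat j) by (simpl; lia). reflexivity.
    - cbn [sL].
      assert (F : (fun k => u (w0 i v) (0%nat,k)) = x i (fun k => u v (0%nat,k)))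
        by (extensionality k; rewrite (Hrel i v Hv) by (simpl; lia); reflexivity).
      rewrite F, (Hrel i v Hv 1%nat j) by (simpl; lia).
      unfold dsum; cbn [fst snd pair_seq sL].
      change (fun k => Cadd (L' (fun k0 => u v (0%nat,k0)) k) (u v (1%nat,k)))
        with (vadd (L' (fun k0 => u v (0%nat,k0))) (fun k => u v (1%nat,k))).
      rewrite op_add by (try apply l2_op; apply l2_slice; apply (proj1 (Hin v Hv))).
      rewrite HL' by (apply l2_slice; apply (proj1 (Hin v Hv))). Cring. }
  intros i v0 Hv0 k0.
  set (e0 := emb 0 v0).
  assert (He0 : l2_in (supp_l (NFin 2)) e0).
  { split.
    - destruct Hv0 as [c Hc]; exists c; apply nrm2_emb; auto.
    - intros [n j] Hns; unfold e0, emb; simpl.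
      destruct (Nat.eqb_spec n 0); [subst; unfold supp_l, below in Hns; simpl in Hns; lia | reflexivity]. }
  destruct (Hsurj e0 He0) as [v [Hv Huv]].
  assert (Hp : (fun k => u v (0%nat,k)) = v0) by (extensionality k; rewrite Huv; reflexivity).
  pose proof (Gen L HL i v Hv) as G1.
  assert (HL0 : forall i v, l2 v -> forall k, zop (x i v) k = y i (zop v) k).
  { intros; simpl; symmetry; apply op_zero. }
  pose proof (Gen zop HL0 i v Hv) as G0.
  assert (A0 : (fun k => u (f w0 i v) (0%nat,k)) = f x i v0).
  { extensionality k. pose proof (G1 0%nat k ltac:(simpl; lia)) as H.
    unfold dsum in H; cbn [sL fst snd pair_seq] in H. rewrite H, Hp. reflexivity. }
  assert (A1 : u (f w0 i v) (1%nat,k0) = (0,0)).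
  { pose proof (G0 1%nat k0 ltac:(simpl; lia)) as H.
    unfold dsum in H; cbn [sL fst snd pair_seq] in H.
    replace (fun k => Cadd (zop (fun k1 => u v (0%nat, k1)) k) (u v (1%nat,k)))
      with (fun _ : nat => ((0,0):C)) in H
      by (extensionality k; rewrite Huv; unfold e0, emb; simpl; Cring).
    rewrite op_zero in H. simpl in H. rewrite <- H; Cring. }
  pose proof (G1 1%nat k0 ltac:(simpl; lia)) as H.
  unfold dsum in H; cbn [sL fst snd pair_seq] in H.
  rewrite A0, A1, Hp in H.
  replace (fun k => Cadd (L v0 k) (u v (1%nat,k))) with (L v0) in H
    by (extensionality k; rewrite Huv; unfold e0, emb; simpl; Cring).
  rewrite <- H; Cring.
Qed.
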